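(* Let $G$ be an extremal uniformly $3$-connected graph on $n=3k+\ell\ge 5$ vertices, where $k\in\mathbb{N}\setminus\{1\}$ and $\ell\in\{-1,0,1\}$. Consider a construction of $G$ from complete graphs on four vertices using $j$ bridge operations, $t$ edge joins, $p$ primary spoke operations and $s$ secondary spoke operations. Then: (1) $p=k-1$; (2) if $\ell=-1$, then $j=k-2$ and $t=s=0$; (3) if $\ell=0$, then $j=k-2$, $t=0$, $s=1$; (4) if $\ell=1$, then either $j=k-1$ and $t=s=0$, or $j=k-2$, $t=1$, $s=0$, or $j=k-2$, $t=0$, $s=2$.
   Context: All graphs are finite and simple. A graph on at least $k+1$ vertices is uniformly $k$-connected if each pair of its vertices is connected by $k$ and not more than $k$ independent paths. For a graph $G$, $\nu(G)$ is the number of vertices of $G$ whose degree equals the minimum degree of $G$. Every uniformly $3$-connected graph $G$ on $n$ vertices satisfies $\nu(G)\ge\lceil(2n+2)/3\rceil$; $G$ is called extremal if equality holds. Operations. (1) Edge join: for a graph $H$ and two distinct edges $st, vw\in E(H)$ (which may share one endvertex), form $H + x + y - st - vw + sx + xt + vy + yw + xy$ with new vertices $x,y$; every $3$-regular $3$-connected graph arises from $K_4$ by edge joins, and edge joins are applied to $3$-regular $3$-connected graphs. (2) Bridge operation: for vertex-disjoint graphs $G_1,G_2$ with $v_1\in V(G_1)$, $v_2\in V(G_2)$, $N(v_1)=\{x_1,y_1,z_1\}$, $N(v_2)=\{x_2,y_2,z_2\}$, form $(G_1-v_1)\cup(G_2-v_2)+x_1x_2+y_1y_2+z_1z_2$.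 (3) Spoke operation: for a graph $H$ with distinct vertices $v,w,x$ with $vw\in E(H)$ and $\deg(z)=3$ for all $z\in V(H)\setminus\{x\}$, form $H+y-vw+vy+wy+xy$ with a new vertex $y$; it is primary if $\deg(x)=3$ and secondary if $\deg(x)>3$. It is known that a graph is uniformly $3$-connected if and only if it belongs to the smallest class containing all $3$-regular $3$-connected graphs and closed under bridge operations and spoke operations; thus each uniformly $3$-connected graph can be constructed from copies of $K_4$ by these operations. *)

(* Defs.v *)
From mathcomp Require Import all_boot all_order all_algebra.
Set Implicit Arguments. Unset Strict Implicit. Unset Printing Implicit Defensive.

Record sgraph := SGraph {
  gn : nat;
  gadj : rel 'I_gn;
  gsym : symmetric gadj;
  girr : irreflexive gadj }.
Arguments gadj : clear implicits.

Definition vert (G : sgraph) := 'I_(gn G).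

Definition deg (G : sgraph) (v : vert G) : nat := #|[set w | gadj G v w]|.

Definition nu (G : sgraph) : nat :=
  #|[set v : vert G | [forall w : vert G, deg v <= deg w]]|.

(* A u-v path, given by the list q of vertices after u (so the path is u :: q). *)
Definition is_uv_path (G : sgraph) (u v : vert G) (q : seq (vert G)) : bool :=
  [&& path (gadj G) u q, last u q == v & uniq (u :: q)].

Definition indep_paths (G : sgraph) (m : nat) (u v : vert G) : Prop :=
  exists P : 'I_m -> seq (vert G),
    (forall i, is_uv_path u v (P i)) /\
    (forall i j, i != j ->
       P i != P j /\ (forall x, x \in P i -> x \in P j -> x = v)).

Definition uniformly_connected (k : nat) (G : sgraph) : Prop :=
  k.+1 <= gn G /\
  forall u v : vert G, u != v -> indep_paths k u v /\ ~ indep_paths k.+1 u v.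

Definition k_connected (k : nat) (G : sgraph) : Prop :=
  k < gn G /\
  forall S : {set vert G}, #|S| < k ->
    forall u v : vert G, u \notin S -> v \notin S ->
      exists q, is_uv_path u v q /\ all (fun x => x \notin S) q.

Definition cubic (G : sgraph) : Prop := forall v : vert G, deg v = 3.

Definition complete4 (G : sgraph) : Prop :=
  gn G = 4 /\ forall u v : vert G, u != v -> gadj G u v.

Definition same_edge (T : eqType) (a b c d : T) : bool :=
  ((a == c) && (b == d)) || ((a == d) && (b == c)).

(* G = H + x + y - st - vw + sx + xt + vy + yw + xy  (up to isomorphism:
   f embeds H into G, and x, y are the two new vertices). *)
Definition edge_join (H G : sgraph) : Prop :=
  exists s t v w : vert H,
    [/\ gadj H s t, gadj H v w, ~~ same_edge s t v w & gn G = gn H + 2] /\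
    exists (f : vert H -> vert G) (x y : vert G),
      [/\ injective f, x != y, (forall a, f a != x /\ f a != y) &
          (forall a b, gadj G (f a) (f b) =
                       [&& gadj H a b, ~~ same_edge a b s t & ~~ same_edge a b v w])] /\
      [/\ (forall a, gadj G x (f a) = (a == s) || (a == t)),
          (forall a, gadj G y (f a) = (a == v) || (a == w)) &
          gadj G x y].

(* Bridge operation: G = (G1 - v1) u (G2 - v2) + x1x2 + y1y2 + z1z2 where
   N(v1) = {x1,y1,z1}, N(v2) = {x2,y2,z2} (up to isomorphism: f1, f2 embed
   G1 - v1 and G2 - v2 into G with disjoint images covering G). *)
Definition bridge (G1 G2 G : sgraph) : Prop :=
  exists (v1 x1 y1 z1 : vert G1) (v2 x2 y2 z2 : vert G2),
    [/\ uniq [:: x1; y1; z1], (forall a, gadj G1 v1 a = (a \in [:: x1; y1; z1])),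
        uniq [:: x2; y2; z2], (forall b, gadj G2 v2 b = (b \in [:: x2; y2; z2])) &
        gn G + 2 = gn G1 + gn G2] /\
    exists (f1 : vert G1 -> vert G) (f2 : vert G2 -> vert G),
      [/\ (forall a a', a != v1 -> a' != v1 -> f1 a = f1 a' -> a = a'),
          (forall b b', b != v2 -> b' != v2 -> f2 b = f2 b' -> b = b') &
          (forall a b, a != v1 -> b != v2 -> f1 a != f2 b)] /\
      [/\ (forall a a', a != v1 -> a' != v1 -> gadj G (f1 a) (f1 a') = gadj G1 a a'),
          (forall b b', b != v2 -> b' != v2 -> gadj G (f2 b) (f2 b') = gadj G2 b b') &
          (forall a b, a != v1 -> b != v2 ->
             gadj G (f1 a) (f2 b) =
             [|| (a == x1) && (b == x2), (a == y1) && (b == y2)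
               | (a == z1) && (b == z2)])].

(* Spoke operation: G = H + y - vw + vy + wy + xy, where deg z = 3 for all
   z <> x; primary if deg x = 3, secondary if deg x > 3. *)
Definition spoke (primary : bool) (H G : sgraph) : Prop :=
  exists v w x : vert H,
    [/\ uniq [:: v; w; x], gadj H v w, (forall z, z != x -> deg z = 3),
        (if primary then deg x == 3 else 3 < deg x) & gn G = gn H + 1] /\
    exists (f : vert H -> vert G) (y : vert G),
      [/\ injective f, (forall a, f a != y),
          (forall a b, gadj G (f a) (f b) = gadj H a b && ~~ same_edge a b v w) &
          (forall a, gadj G y (f a) = (a \in [:: v; w; x]))].

Inductive construction : sgraph -> nat -> nat -> nat -> nat -> Prop :=
| cK4 G : complete4 G -> construction G 0 0 0 0
| cEJ H G j t p s : construction H j t p s -> cubic H -> k_connected 3 H ->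
    edge_join H G -> construction G j t.+1 p s
| cBR G1 G2 G j1 t1 p1 s1 j2 t2 p2 s2 :
    construction G1 j1 t1 p1 s1 -> construction G2 j2 t2 p2 s2 ->
    bridge G1 G2 G -> construction G (j1 + j2).+1 (t1 + t2) (p1 + p2) (s1 + s2)
| cSP1 H G j t p s : construction H j t p s -> spoke true H G ->
    construction G j t p.+1 s
| cSP2 H G j t p s : construction H j t p s -> spoke false H G ->
    construction G j t p s.+1.

Definition ceil_div (a b : nat) : nat := (a + b.-1) %/ b.

Definition extremal (G : sgraph) : Prop :=
  uniformly_connected 3 G /\ nu G = ceil_div (2 * gn G + 2) 3.

(* Main.v *)
Require Import Defs.
From mathcomp Require Import all_boot all_order all_algebra.
From mathcomp Require Import zify.
Import GRing.Theory.
Set Implicit Arguments. Unset Strict Implicit. Unset Printing Implicit Defensive.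

Lemma sum_card (T : finType) (P : pred T) :
  \sum_(a : T) (P a : nat) = #|[set a | P a]|.
Proof.
rewrite -sum1_card [RHS]big_mkcond /=; apply: eq_bigr => a _; rewrite inE.
by case: (P a).
Qed.

Lemma degE (G : sgraph) (v : vert G) : deg v = \sum_(w : vert G) (gadj G v w : nat).
Proof. by rewrite sum_card. Qed.

Lemma sum_pt (T : finType) (c : T) (Q : pred T) :
  (forall b, b != c -> ~~ Q b) -> \sum_(b : T) (Q b : nat) = Q c.
Proof.
move=> H; rewrite (bigD1 c) //= big1 ?addn0 // => b /H /negbTE ->. done.
Qed.

Lemma sumD1 (T : finType) (v : T) (F : T -> nat) :
  \sum_(b : T) F b = F v + \sum_(b in [set~ v]) F b.
Proof.
rewrite (bigD1 v) //=; congr (_ + _); apply: eq_bigl => b; by rewrite in_setC1.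
Qed.

Lemma cover (U T1 T2 : finType) (A : {set T1}) (B : {set T2})
  (f : T1 -> U) (g : T2 -> U) :
  {in A &, injective f} -> {in B &, injective g} ->
  (forall a b, a \in A -> b \in B -> f a != g b) -> #|U| = #|A| + #|B| ->
  [disjoint f @: A & g @: B] /\ f @: A :|: g @: B = setT.
Proof.
move=> fi gi fg cU.
have dis : [disjoint f @: A & g @: B].
  apply/pred0P => u /=; apply/negP => /andP [/imsetP [a Ha ->] /imsetP [b Hb /eqP]].
  by rewrite (negbTE (fg a b Ha Hb)).
split => //; apply/eqP; rewrite eqEcard subsetT /= cardsT cardsU.
by rewrite (card_in_imset fi) (card_in_imset gi) (disjoint_setI0 dis) cards0 subn0 cU.
Qed.

Lemma sum_cover (U T1 T2 : finType) (A : {set T1}) (B : {set T2})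
  (f : T1 -> U) (g : T2 -> U) (F : U -> nat) :
  {in A &, injective f} -> {in B &, injective g} ->
  (forall a b, a \in A -> b \in B -> f a != g b) -> #|U| = #|A| + #|B| ->
  \sum_(u : U) F u = \sum_(a in A) F (f a) + \sum_(b in B) F (g b).
Proof.
move=> fi gi fg cU; have [dis cov] := cover fi gi fg cU.
rewrite -(big_imset F fi) -(big_imset F gi) -bigU //=.
apply: eq_bigl => u; have : u \in [set: U] by rewrite inE.
by rewrite -cov inE => H; symmetry; exact: H.
Qed.

Lemma cover_in (U T1 T2 : finType) (A : {set T1}) (B : {set T2})
  (f : T1 -> U) (g : T2 -> U) :
  {in A &, injective f} -> {in B &, injective g} ->
  (forall a b, a \in A -> b \in B -> f a != g b) -> #|U| = #|A| + #|B| ->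
  forall u, (exists2 a, a \in A & u = f a) \/ (exists2 b, b \in B & u = g b).
Proof.
move=> fi gi fg cU u; have [_ cov] := cover fi gi fg cU.
have : u \in f @: A :|: g @: B by rewrite cov inE.
by rewrite inE => /orP [/imsetP [a Ha ->]|/imsetP [b Hb ->]]; [left|right]; exists a + exists b.
Qed.

Lemma same_edgeC (T : eqType) (a b c d : T) : same_edge a b c d = same_edge c d a b.
Proof.
rewrite /same_edge (eq_sym c a) (eq_sym d b) (eq_sym c b) (eq_sym d a).
by rewrite (andbC (b == c)).
Qed.

Lemma same_edgeS (T : eqType) (a b c d : T) : same_edge a b c d = same_edge b a c d.
Proof. by rewrite /same_edge orbC [(b == c) && _]andbC [(b == d) && _]andbC. Qed.

Lemma adj_neq (H : sgraph) (a b : vert H) : gadj H a b -> a != b.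
Proof. by apply: contraTneq => ->; rewrite girr. Qed.

Lemma orb_nat (b1 b2 : bool) : ~~ (b1 && b2) -> ((b1 || b2) : nat) = b1 + b2.
Proof. by case: b1; case: b2. Qed.

Lemma sum_rm (H : sgraph) (s t a : vert H) (P : pred (vert H)) : gadj H s t ->
  \sum_b (gadj H a b && P b : nat) =
  \sum_b (gadj H a b && P b && ~~ same_edge a b s t : nat) + ((a == s) && P t) + ((a == t) && P s).
Proof.
move=> ast; have sneqt := adj_neq ast.
have -> : \sum_b (gadj H a b && P b : nat) =
   \sum_b (gadj H a b && P b && ~~ same_edge a b s t : nat) +
   \sum_b (gadj H a b && P b && same_edge a b s t : nat).
  rewrite -big_split /=; apply: eq_bigr => b _.
  by case: (same_edge _ _ _ _); rewrite ?andbT ?andbF ?addn0.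
rewrite -addnA; congr (_ + _); rewrite /same_edge.
case: (eqVneq a s) => [->|nas].
  rewrite (negbTE sneqt) /= addn0 (sum_pt (c:=t)).
    by rewrite eqxx ast /= andbT.
  by move=> b nbt; rewrite (negbTE nbt) !andbF.
case: (eqVneq a t) => [->|nat_].
  rewrite /= add0n (sum_pt (c:=s)).
    by rewrite eqxx gsym ast /= andbT.
  by move=> b nbs; rewrite (negbTE nbs) !andbF.
by rewrite /= big1 // => b _; rewrite andbF.
Qed.

Lemma sum_ext (T U : finType) (f : T -> U) (X : {set U}) (F : U -> nat) :
  injective f -> (forall a b, b \in X -> f a != b) -> #|U| = #|T| + #|X| ->
  \sum_(u : U) F u = \sum_(a : T) F (f a) + \sum_(b in X) F b.
Proof.
move=> fi fX cU.
rewrite (@sum_cover U T U setT X f id F).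
- by congr (_ + _); apply: eq_bigl => a; rewrite inE.
- by move=> a b _ _ /fi.
- by move=> a b _ _.
- by move=> a b _ /(fX a).
- by rewrite cardsT.
Qed.

Lemma cover_ext (T U : finType) (f : T -> U) (X : {set U}) :
  injective f -> (forall a b, b \in X -> f a != b) -> #|U| = #|T| + #|X| ->
  forall u, (exists a, u = f a) \/ u \in X.
Proof.
move=> fi fX cU u.
have h1 : {in setT &, injective f} by move=> a b _ _ /fi.
have h2 : {in X &, injective (@id U)} by move=> a b _ _.
have h3 : forall a b, a \in setT -> b \in X -> f a != id b by move=> a b _ /(fX a).
have h4 : #|U| = #|[set: T]| + #|X| by rewrite cardsT.
case: (cover_in h1 h2 h3 h4 u).
- by case=> a _ ->; left; exists a.
- by case=> b Hb ->; right.
Qed.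

Lemma sum_rm0 (H : sgraph) (s t a : vert H) : gadj H s t ->
  \sum_b (gadj H a b : nat) =
  \sum_b (gadj H a b && ~~ same_edge a b s t : nat) + (a == s) + (a == t).
Proof.
move=> ast; have := sum_rm a (fun _ => true) ast.
have -> : \sum_b (gadj H a b && true : nat) = \sum_b (gadj H a b : nat).
  by apply: eq_bigr => b _; rewrite andbT.
have -> : \sum_b (gadj H a b && true && ~~ same_edge a b s t : nat) =
          \sum_b (gadj H a b && ~~ same_edge a b s t : nat).
  by apply: eq_bigr => b _; rewrite andbT.
by rewrite !andbT.
Qed.

Lemma complete4_cubic G : complete4 G -> cubic G.
Proof.
case=> e4 adj v; rewrite /deg.
have -> : [set w | gadj G v w] = [set~ v].
  apply/setP => w; rewrite !inE; case: (eqVneq w v) => [->|wv].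
    by rewrite girr.
  by rewrite adj // eq_sym.
by rewrite cardsC1 card_ord e4.
Qed.

Lemma ej_cubic H G : edge_join H G -> cubic H -> cubic G /\ gn G = gn H + 2.
Proof.
case=> s [t [v [w [[ast avw nse eqn] [f [x [y [[finj xy fxy fadj] [xadj yadj xyadj]]]]]]]]].
move=> cubH; split => //.
have fX : forall a b, b \in [set x; y] -> f a != b.
  by move=> a b; rewrite !inE => /orP [] /eqP ->; case: (fxy a).
have cU : #|'I_(gn G)| = #|'I_(gn H)| + #|[set x; y]|.
  by rewrite !card_ord cards2 xy eqn.
have sumG F := sum_ext F finj fX cU.
have s2 (F : vert G -> nat) : \sum_(b in [set x; y]) F b = F x + F y.
  by rewrite big_setU1 ?big_set1 // inE.
have sneqt := adj_neq ast.
move=> u; case: (cover_ext finj fX cU u) => [[a ->]|].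
  rewrite degE sumG s2.
  under eq_bigr do rewrite fadj.
  rewrite gsym xadj gsym yadj.
  rewrite -(cubH a) degE (sum_rm0 a ast).
  have := sum_rm a (fun b => ~~ same_edge a b s t) avw => /= ->.
  have -> : (a == v) && ~~ same_edge a w s t = (a == v).
    by case: eqP => // ->; rewrite same_edgeC nse.
  have -> : (a == w) && ~~ same_edge a v s t = (a == w).
    by case: eqP => // ->; rewrite same_edgeS same_edgeC nse.
  rewrite (orb_nat (b1 := a == s)); last first.
    by apply/andP => [[/eqP -> /eqP e]]; move: sneqt; rewrite e eqxx.
  rewrite (orb_nat (b1 := a == v)); last first.
    by apply/andP => [[/eqP -> /eqP e]]; move: (adj_neq avw); rewrite e eqxx.
  have -> : \sum_b (gadj H a b && ~~ same_edge a b s t && ~~ same_edge a b v w : nat) =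
     \sum_b ([&& gadj H a b, ~~ same_edge a b s t & ~~ same_edge a b v w] : nat).
    by apply: eq_bigr => b _; rewrite andbA.
  rewrite -!addnA; congr (_ + _).
  move: (nat_of_bool (a == s)) (nat_of_bool (a == t)) (nat_of_bool (a == v)) (nat_of_bool (a == w)) => n1 n2 n3 n4; lia.
have sumst : \sum_a ((a == s) || (a == t) : nat) = 2.
  rewrite sum_card.
  have -> : [set a | (a == s) || (a == t)] = [set s; t] by apply/setP => a; rewrite !inE.
  by rewrite cards2 sneqt.
have svw : \sum_a ((a == v) || (a == w) : nat) = 2.
  rewrite sum_card.
  have -> : [set a | (a == v) || (a == w)] = [set v; w] by apply/setP => a; rewrite !inE.
  by rewrite cards2 (adj_neq avw).
rewrite !inE => /orP [] /eqP ->; rewrite degE sumG s2 girr.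
  under eq_bigr do rewrite xadj.
  by rewrite sumst xyadj.
under eq_bigr do rewrite yadj.
by rewrite svw gsym xyadj.
Qed.

Lemma in3_nat (T : eqType) (a v w x : T) : uniq [:: v; w; x] ->
  (a \in [:: v; w; x] : nat) = (a == v) + (a == w) + (a == x).
Proof.
rewrite /= !inE !negb_or andbT => /andP [/andP [vw vx] wx].
rewrite ?inE.
case: (eqVneq a v) => [->|av]; first by rewrite (negbTE vw) (negbTE vx).
case: (eqVneq a w) => [->|aw]; first by rewrite (negbTE wx).
by case: (a == x).
Qed.

Lemma card3 (T : finType) (v w x : T) : uniq [:: v; w; x] ->
  \sum_a (a \in [:: v; w; x] : nat) = 3.
Proof.
move=> u; rewrite sum_card.

by rewrite cardsE; apply/card_uniqP.
Qed.

Lemma spoke_deg prim H G : spoke prim H G ->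
  exists (x : vert H) (f : vert H -> vert G) (y : vert G),
  [/\ injective f, forall a, f a != y, gn G = gn H + 1, deg y = 3
    & forall a, deg (f a) = deg a + (a == x)] /\
  (forall F : vert G -> nat, \sum_u F u = \sum_a F (f a) + F y) /\
  (forall u : vert G, (exists a, u = f a) \/ u \in [set y]) /\
  (forall z, z != x -> deg z = 3) /\ (if prim then deg x == 3 else 3 < deg x).
Proof.
case=> v [w [x [[uq avw deg3 pr eqn] [f [y [finj fy fadj yadj]]]]]].
exists x, f, y.
have fX : forall a b, b \in [set y] -> f a != b by move=> a b; rewrite inE => /eqP ->.
have cU : #|'I_(gn G)| = #|'I_(gn H)| + #|[set y]| by rewrite !card_ord cards1 eqn.
have sumG F := sum_ext F finj fX cU.
split; last split; last split; last by [].
2: by move=> F; rewrite sumG big_set1.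
2: exact: cover_ext finj fX cU.
split => //.
  by rewrite degE sumG big_set1 girr addn0; under eq_bigr do rewrite yadj; rewrite card3.
move=> a; rewrite degE sumG big_set1 gsym yadj.
under eq_bigr do rewrite fadj.
rewrite degE (sum_rm0 a avw) in3_nat //.
by rewrite !addnA.
Qed.

Lemma bridge_deg G1 G2 G : bridge G1 G2 G ->
  exists (v1 : vert G1) (v2 : vert G2) (f1 : vert G1 -> vert G) (f2 : vert G2 -> vert G),
  [/\ gn G + 2 = gn G1 + gn G2, deg v1 = 3, deg v2 = 3,
      forall a, a != v1 -> deg (f1 a) = deg a &
      forall b, b != v2 -> deg (f2 b) = deg b] /\
  (forall F : vert G -> nat,
     \sum_u F u = \sum_(a in [set~ v1]) F (f1 a) + \sum_(b in [set~ v2]) F (f2 b)) /\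
  (forall u : vert G, (exists2 a, a != v1 & u = f1 a) \/ (exists2 b, b != v2 & u = f2 b)).
Proof.
case=> v1 [x1 [y1 [z1 [v2 [x2 [y2 [z2 [[u1 a1 u2 a2 en] [f1 [f2 [[i1 i2 d12] [e11 e22 e12]]]]]]]]]]]].
exists v1, v2, f1, f2.
have h1 : {in [set~ v1] &, injective f1}.
  by move=> a a'; rewrite !in_setC1 => ha ha'; exact: i1.
have h2 : {in [set~ v2] &, injective f2}.
  by move=> a a'; rewrite !in_setC1 => ha ha'; exact: i2.
have h3 : forall a b, a \in [set~ v1] -> b \in [set~ v2] -> f1 a != f2 b.
  by move=> a b; rewrite !in_setC1; exact: d12.
have h4 : #|'I_(gn G)| = #|[set~ v1]| + #|[set~ v2]|.
  rewrite !cardsC1 !card_ord; have := ltn_ord v1; have := ltn_ord v2; lia.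
have sumG F := sum_cover F h1 h2 h3 h4.
have cov := cover_in h1 h2 h3 h4.
have d1 : deg v1 = 3 by rewrite degE; under eq_bigr do rewrite a1; rewrite card3.
have d2 : deg v2 = 3 by rewrite degE; under eq_bigr do rewrite a2; rewrite card3.
have n1 : forall b, b \in [:: x1; y1; z1] -> v1 != b.
  by move=> b hb; apply: adj_neq; rewrite a1.
have n2 : forall b, b \in [:: x2; y2; z2] -> v2 != b.
  by move=> b hb; apply: adj_neq; rewrite a2.
have v2x2 := n2 x2 (mem_head _ _).
have v2y2 : v2 != y2 by apply: n2; rewrite !inE eqxx orbT.
have v2z2 : v2 != z2 by apply: n2; rewrite !inE eqxx !orbT.
have v1x1 := n1 x1 (mem_head _ _).
have v1y1 : v1 != y1 by apply: n1; rewrite !inE eqxx orbT.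
have v1z1 : v1 != z1 by apply: n1; rewrite !inE eqxx !orbT.
move: (u1) (u2); rewrite /= !inE !negb_or !andbT => /andP [/andP [x1y1 x1z1] y1z1] /andP [/andP [x2y2 x2z2] y2z2].
split; last split.
- split => //.
  + move=> a av1; rewrite degE sumG.
    rewrite (eq_bigr (fun a' => gadj G1 a a' : nat)); last first.
      by move=> a'; rewrite in_setC1 => ha'; rewrite e11.
    rewrite (eq_bigr (fun b => [|| (a == x1) && (b == x2), (a == y1) && (b == y2)
                                 | (a == z1) && (b == z2)] : nat)); last first.
      by move=> b; rewrite in_setC1 => hb; rewrite e12.
    rewrite degE (sumD1 v1) gsym a1 addnC; congr (_ + _).
    apply/eqP; rewrite -(eqn_add2l 0); apply/eqP.
    have {1}-> : 0 = ([|| (a == x1) && (v2 == x2), (a == y1) && (v2 == y2)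
                      | (a == z1) && (v2 == z2)] : nat).
      by rewrite (negbTE v2x2) (negbTE v2y2) (negbTE v2z2) !andbF.
    rewrite -(sumD1 v2 (fun b => [|| (a == x1) && (b == x2), (a == y1) && (b == y2)
                                 | (a == z1) && (b == z2)] : nat)) add0n.
    case: (eqVneq a x1) => [->|ax1].
      rewrite (negbTE x1y1) (negbTE x1z1) mem_head (sum_pt (c := x2)) ?eqxx //.
      by move=> b nb; rewrite (negbTE nb).
    case: (eqVneq a y1) => [->|ay1].
      rewrite (negbTE y1z1) (sum_pt (c := y2)) ?eqxx ?inE ?eqxx ?orbT //.
      by move=> b nb; rewrite (negbTE nb).
    case: (eqVneq a z1) => [->|az1].
      rewrite (sum_pt (c := z2)); first by rewrite !inE !eqxx !orbT.
      by move=> b nb; rewrite (negbTE nb).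
    rewrite !inE (negbTE ax1) (negbTE ay1) (negbTE az1) /= big1 //.
  + move=> b bv2; rewrite degE sumG.
    rewrite (eq_bigr (fun b' => gadj G2 b b' : nat)); last first.
      by move=> b'; rewrite in_setC1 => hb'; rewrite e22.
    rewrite (eq_bigr (fun a => [|| (a == x1) && (b == x2), (a == y1) && (b == y2)
                                 | (a == z1) && (b == z2)] : nat)); last first.
      by move=> a; rewrite in_setC1 => ha; rewrite gsym e12.
    rewrite degE (sumD1 v2) gsym a2; congr (_ + _).
    apply/eqP; rewrite -(eqn_add2l 0); apply/eqP.
    have {1}-> : 0 = ([|| (v1 == x1) && (b == x2), (v1 == y1) && (b == y2)
                      | (v1 == z1) && (b == z2)] : nat).
      by rewrite (negbTE v1x1) (negbTE v1y1) (negbTE v1z1).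
    rewrite -(sumD1 v1 (fun a => [|| (a == x1) && (b == x2), (a == y1) && (b == y2)
                                 | (a == z1) && (b == z2)] : nat)) add0n.
    case: (eqVneq b x2) => [->|bx2].
      rewrite (negbTE x2y2) (negbTE x2z2) mem_head (sum_pt (c := x1)) ?eqxx ?andbT //.
      by move=> a na; rewrite (negbTE na) !andbF.
    case: (eqVneq b y2) => [->|by2].
      rewrite (negbTE y2z2) (sum_pt (c := y1)) ?eqxx ?andbT ?inE ?eqxx ?orbT //.
      by move=> a na; rewrite (negbTE na) !andbF.
    case: (eqVneq b z2) => [->|bz2].
      rewrite (sum_pt (c := z1)); first by rewrite !inE !eqxx !orbT.
      by move=> a na; rewrite (negbTE na) !andbF.
    by rewrite !inE (negbTE bx2) (negbTE by2) (negbTE bz2) /= big1 // => a _; rewrite !andbF.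
- move=> F; apply: (sumG F).
- move=> u; case: (cov u) => [[a]|[b]]; rewrite in_setC1 => h ->; [left|right].
    by exists a.
  by exists b.
Qed.

Definition Inv (G : sgraph) (j t p s : nat) : Prop :=
  [/\ gn G = 4 + 2 * j + 2 * t + p + s, forall v : vert G, 3 <= deg v,
      \sum_(v : vert G) (deg v != 3 : nat) = p & p <= j.+1].

Lemma sum0_cubic G : \sum_(v : vert G) (deg v != 3 : nat) = 0 -> cubic G.
Proof.
move=> h v; apply/eqP/negPn/negP => hv; move: h.
by rewrite (bigD1 v) //= hv.
Qed.

Lemma cubic_sum0 G : cubic G -> \sum_(v : vert G) (deg v != 3 : nat) = 0.
Proof. by move=> c; rewrite big1 // => v _; rewrite c. Qed.

Lemma construction_inv G j t p s : construction G j t p s -> Inv G j t p s.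
Proof.
elim => {G j t p s}.
- move=> G c4; have cG := complete4_cubic c4; case: c4 => e4 _.
  split => //; first by move=> v; rewrite cG.
  exact: cubic_sum0.
- move=> H G j t p s _ [e1 d1 s1 p1] cH _ ej.
  have [cG eG] := ej_cubic ej cH.
  have p0 : p = 0 by rewrite -s1 cubic_sum0.
  rewrite ?p0 ?pE; split => //; first by rewrite eG e1; lia.
  + by move=> v; rewrite cG.
  + exact: cubic_sum0.
- move=> G1 G2 G j1 t1 p1 s1 j2 t2 p2 s2 _ [e1 d1 S1 q1] _ [e2 d2 S2 q2] br.
  have [v1 [v2 [f1 [f2 [[en dv1 dv2 df1 df2] [sumG cov]]]]]] := bridge_deg br.
  split.
  + lia.
  + move=> u; case: (cov u) => [[a av ->]|[b bv ->]]; by rewrite ?df1 ?df2.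
  + rewrite sumG -S1 -S2 (sumD1 v1) (sumD1 v2 (fun b => (deg b != 3 : nat))) dv1 dv2 /=.
    rewrite !add0n; congr (_ + _); apply: eq_bigr.
      by move=> a; rewrite in_setC1 => ha; rewrite df1.
    by move=> b; rewrite in_setC1 => hb; rewrite df2.
  + lia.
- move=> H G j t p s _ [e1 d1 s1 p1] sp.
  have [x [f [y [[fi fy eG dy df] [sumG [cov [d3 dx]]]]]]] := spoke_deg sp.
  have cH : cubic H by move=> z; case: (eqVneq z x) => [->|zx]; [apply/eqP | apply: d3].
  have p0 : p = 0 by rewrite -s1 cubic_sum0.
  rewrite ?p0 ?pE; split.
  + lia.
  + move=> u; case: (cov u) => [[a ->]|]; last by rewrite inE => /eqP ->; rewrite dy.
    by rewrite df cH.
  + rewrite sumG dy addn0 (sum_pt (c := x)).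
      by rewrite df cH eqxx.
    by move=> a ax; rewrite df cH (negbTE ax).
  + done.
- move=> H G j t p s _ [e1 d1 s1 p1] sp.
  have [x [f [y [[fi fy eG dy df] [sumG [cov [d3 dx]]]]]]] := spoke_deg sp.
  have pE : p = 1.
    rewrite -s1 (sum_pt (c := x)).
      by case: (deg x) dx => // [[|[|[|]]]].
    by move=> a ax; rewrite d3.
  rewrite ?p0 ?pE; split.
  + lia.
  + move=> u; case: (cov u) => [[a ->]|]; last by rewrite inE => /eqP ->; rewrite dy.
    rewrite df; case: (eqVneq a x) => [->|ax]; first by lia.
    by rewrite d3.
  + rewrite sumG dy addn0 (sum_pt (c := x)).
      by rewrite df eqxx; case: (deg x) dx => // [[|[|[|]]]].
    by move=> a ax; rewrite df d3 // (negbTE ax).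
  + done.
Qed.

Lemma nu_inv G j t p s : Inv G j t p s -> nu G + p = gn G.
Proof.
case=> e1 d1 s1 p1.
have tot : \sum_(v : vert G) (deg v == 3 : nat) + p = gn G.
  rewrite -s1 -big_split /=.
  rewrite (eq_bigr (fun _ => 1)); last by move=> v _; case: (deg v == 3).
  by rewrite sum_nat_const card_ord muln1.
have [w0 /eqP dw0] : exists w : vert G, deg w == 3.
  case: (boolP [exists w : vert G, deg w == 3]) => [/existsP //|hn].
  have : \sum_(v : vert G) (deg v != 3 : nat) = gn G.
    rewrite (eq_bigr (fun _ => 1)); first by rewrite sum_nat_const card_ord muln1.
    move=> v _; have := hn; rewrite negb_exists => /forallP /(_ v) -> //.
  rewrite s1; lia.
rewrite /nu.
have -> : [set v : vert G | [forall w : vert G, deg v <= deg w]] = [set v | deg v == 3].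
  apply/setP => v; rewrite !inE; apply/forallP/eqP.
    by move=> h; have := h w0; have := d1 v; rewrite dw0; lia.
  by move=> -> w; exact: d1.
by rewrite -sum_card.
Qed.

Theorem theorem16 (G : sgraph) (k : nat) (l : int) (j t p s : nat) :
  k != 1 -> l \in [:: (-1)%R; 0%R; 1%R] ->
  ((gn G)%:Z = 3%:Z * k%:Z + l)%R -> 5 <= gn G ->
  extremal G ->
  construction G j t p s ->
  [/\ p = k - 1,
      l = (-1)%R -> [/\ j = k - 2, t = 0 & s = 0],
      l = 0%R -> [/\ j = k - 2, t = 0 & s = 1] &
      l = 1%R ->
        [/\ j = k - 1, t = 0 & s = 0] \/ [/\ j = k - 2, t = 1 & s = 0] \/
        [/\ j = k - 2, t = 0 & s = 2]].
Proof.
move=> k1 hl hn n5 [_ hnu] hc.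
have I := construction_inv hc.
have hnp := nu_inv I.
case: I => e1 _ _ pj.
move: hnu; rewrite /ceil_div /= => hnu.
move: hl; rewrite !inE => /or3P [] /eqP hl; subst l.
- have hN : gn G + 1 = 3 * k.
    by apply/eqP; rewrite -eqz_nat PoszD PoszM hn subrK.
  clear hn; split; try lia; move=> h; try lia; split; lia.
- have hN : gn G = 3 * k.
    by apply/eqP; rewrite -eqz_nat PoszM hn addr0.
  clear hn; split; try lia; move=> h; try lia; split; lia.
- have hN : gn G = 3 * k + 1.
    by apply/eqP; rewrite -eqz_nat PoszD PoszM hn.
  clear hn; split; try lia; move=> h; try lia.
  have : (j = k-1 /\ t = 0 /\ s = 0) \/ (j = k-2 /\ t = 1 /\ s = 0) \/
         (j = k-2 /\ t = 0 /\ s = 2) by lia.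
  by case=> [[? [? ?]]|[[? [? ?]]|[? [? ?]]]]; [left|right;left|right;right]; split.
Qed.
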